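(* Let $\kappa:[-1,1]\to\mathbb{R}$ be given by $\kappa(t)=\sum_{q\ge 0}\frac{J_q^2}{q!}t^q$, where $J_q\in\mathbb{R}$, $J_q\neq 0$ for infinitely many $q$, $\sum_{q\ge1}\frac{|J_q|}{(q-1)!}<\infty$ (so that $\kappa\in C^1([-1,1])$), and $\kappa(1)=1$. Let $\mathcal{I}(\kappa)=\{t\in[-1,1]:\kappa(t)=1\}$. Assume $\kappa'(1)\le 1$. Then either $\mathcal{I}(\kappa)=\{1\}$ or $\mathcal{I}(\kappa)=\{-1,1\}$. Moreover, $\mathcal{I}(\kappa)=\{-1,1\}$ if and only if $\kappa(t)=\kappa(-t)$ for all $t\in[-1,1]$. *)

(* Defs.v *)
From Stdlib Require Import Reals.
From Coquelicot Require Import Coquelicot.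
Open Scope R_scope.

Definition kappa (J : nat -> R) (t : R) : R :=
  Series (fun q => J q ^ 2 / INR (Factorial.fact q) * t ^ q).

Definition Ikappa (J : nat -> R) (t : R) : Prop :=
  -1 <= t <= 1 /\ kappa J t = 1.

(* Main.v *)
Require Import Defs.
From Stdlib Require Import Reals Lra Lia Classical.
From Coquelicot Require Import Coquelicot.
Open Scope R_scope.

Definition acoef (J : nat -> R) (q : nat) : R := J q ^ 2 / INR (Factorial.fact q).

Lemma acoef_ge0 J q : 0 <= acoef J q.
Proof.
  unfold acoef. apply Rmult_le_pos. apply pow2_ge_0.
  left. apply Rinv_0_lt_compat. apply INR_fact_lt_0.
Qed.

Lemma acoef_pos J q : J q <> 0 -> 0 < acoef J q.
Proof.
  intro H. unfold acoef. apply Rmult_lt_0_compat.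
  - simpl. rewrite Rmult_1_r. assert (0 < J q * J q) by (apply Rsqr_pos_lt; auto). lra.
  - apply Rinv_0_lt_compat. apply INR_fact_lt_0.
Qed.

Lemma sum_n_ge0 (u : nat -> R) : (forall n, 0 <= u n) -> forall n, u n <= sum_n u n.
Proof.
  intros Hu n. destruct n.
  - rewrite sum_O. lra.
  - rewrite sum_Sn. unfold plus; simpl.
    assert (0 <= sum_n u n).
    { clear -Hu. induction n. rewrite sum_O. apply Hu.
      rewrite sum_Sn. unfold plus; simpl. specialize (Hu (S n)). lra. }
    lra.
Qed.

Lemma series_ge0_zero (u : nat -> R) : (forall n, 0 <= u n) -> is_series u 0 ->
  forall n, u n = 0.
Proof.
  intros Hu Hs n.
  assert (H := is_lim_seq_incr_compare (sum_n u) 0 Hs).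
  assert (Hinc : forall n, sum_n u n <= sum_n u (S n)).
  { intro k. rewrite sum_Sn. unfold plus; simpl. specialize (Hu (S k)). lra. }
  specialize (H Hinc n). pose proof (sum_n_ge0 u Hu n). specialize (Hu n). lra.
Qed.

Lemma ex_series_1 J : kappa J 1 = 1 -> is_series (fun q => acoef J q * 1 ^ q) 1.
Proof.
  intro H1. unfold kappa, Series in H1.
  fold (acoef J) in H1.
  assert (Hinc : forall n, sum_n (fun q => J q ^ 2 / INR (Factorial.fact q) * 1 ^ q) n
     <= sum_n (fun q => J q ^ 2 / INR (Factorial.fact q) * 1 ^ q) (S n)).
  { intro k. rewrite sum_Sn. unfold plus; simpl.
    pose proof (acoef_ge0 J (S k)). unfold acoef in H. rewrite pow1.
    simpl in H. lra. }
  destruct (ex_lim_seq_incr _ Hinc) as [l Hl].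
  rewrite (is_lim_seq_unique _ _ Hl) in H1.
  destruct l as [l| |]; simpl in H1; try lra.
  subst l. exact Hl.
Qed.

Lemma is_series_t J t : kappa J 1 = 1 -> -1 <= t <= 1 ->
  is_series (fun q => acoef J q * t ^ q) (kappa J t).
Proof.
  intros H1 Ht.
  assert (Hex : ex_series (fun q => acoef J q * t ^ q)).
  { apply (@ex_series_le R_AbsRing R_CompleteNormedModule _ (fun q => acoef J q * 1 ^ q)).
    - intro n. change (norm (acoef J n * t ^ n)) with (Rabs (acoef J n * t ^ n)).
      rewrite Rabs_mult, Rabs_pos_eq by apply acoef_ge0.
      apply Rmult_le_compat_l. apply acoef_ge0.
      rewrite <- RPow_abs. apply pow_incr. split. apply Rabs_pos.
      apply Rabs_le. lra.
    - eexists. apply ex_series_1; auto. }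
  apply Series_correct in Hex. exact Hex.
Qed.

Lemma key J t : (exists q, (1 <= q)%nat /\ J q <> 0) -> kappa J 1 = 1 -> Ikappa J t -> t <> 1 ->
  t = -1 /\ forall q, acoef J q * (1 - (-1) ^ q) = 0.
Proof.
  intros [q0 [Hq0 HJ]] H1 [Ht Hk] Hne.
  assert (Hs := is_series_minus _ _ _ _ (ex_series_1 J H1) (is_series_t J t H1 Ht)).
  rewrite Hk in Hs. unfold plus, opp in Hs; simpl in Hs.
  replace (1 + - 1) with 0 in Hs by ring.
  assert (Hz : forall n, acoef J n * 1 ^ n + - (acoef J n * t ^ n) = 0).
  { apply series_ge0_zero; auto. intro n.
    rewrite pow1. pose proof (acoef_ge0 J n).
    assert (t ^ n <= 1).
    { apply Rle_trans with (Rabs (t ^ n)). apply Rle_abs.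
      rewrite <- RPow_abs. rewrite <- (pow1 n). apply pow_incr. split. apply Rabs_pos.
      apply Rabs_le. lra. }
    nra. replace 0 with (1 + - (1)) by ring. exact Hs. }
  assert (Htm : t = -1).
  { destruct (Req_dec t (-1)); auto. exfalso.
    pose proof (acoef_pos J q0 HJ). specialize (Hz q0). rewrite pow1 in Hz.
    assert (Habs : 0 <= Rabs t < 1) by (split; [apply Rabs_pos| apply Rabs_def1; lra]).
    destruct (pow_lt_1_compat _ q0 Habs ltac:(lia)) as [_ Hlt].
    rewrite RPow_abs in Hlt.
    pose proof (Rle_abs (t ^ q0)). nra. }
  split; auto. intro q. specialize (Hz q). rewrite pow1, Htm in Hz. lra.
Qed.

Lemma sym_of_coef J : (forall q, acoef J q * (1 - (-1) ^ q) = 0) ->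
  forall t, kappa J t = kappa J (- t).
Proof.
  intros H t. unfold kappa. apply Series_ext. intro n. fold (acoef J n).
  replace (- t) with ((-1) * t) by ring. rewrite Rpow_mult_distr.
  specialize (H n). replace (acoef J n * ((-1) ^ n * t ^ n)) with (acoef J n * t ^ n - t ^ n * (acoef J n * (1 - (-1) ^ n))) by ring. rewrite H. ring.
Qed.

Theorem lemma3p5 (J : nat -> R)
  (Hinf : forall N : nat, exists q : nat, (N <= q)%nat /\ J q <> 0)
  (Hsum : ex_series (fun k => Rabs (J (S k)) / INR (Factorial.fact k)))
  (H1 : kappa J 1 = 1)
  (Hder : exists l : R,
      filterlim (fun t => (kappa J t - kappa J 1) / (t - 1)) (at_left 1) (locally l)
      /\ l <= 1) :
  ((forall t, Ikappa J t <-> t = 1) \/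
   (forall t, Ikappa J t <-> (t = -1 \/ t = 1))) /\
  ((forall t, Ikappa J t <-> (t = -1 \/ t = 1)) <->
   (forall t, -1 <= t <= 1 -> kappa J t = kappa J (- t))).
Proof.
  assert (Hq := Hinf 1%nat).
  assert (I1 : Ikappa J 1) by (split; [lra|exact H1]).
  assert (Hm : Ikappa J (-1) <-> forall t, -1 <= t <= 1 -> kappa J t = kappa J (- t)).
  { split.
    - intro Hi. destruct (key J (-1) Hq H1 Hi) as [_ Hc]. lra.
      intros t _. apply sym_of_coef; auto.
    - intro Hs. split. lra. rewrite Hs by lra. replace (- -1) with 1 by ring. exact H1. }
  assert (Hboth : Ikappa J (-1) -> forall t, Ikappa J t <-> (t = -1 \/ t = 1)).
  { intros Hi t. split.
    - intro Ht. destruct (Req_dec t 1); auto. left. apply (key J t Hq H1 Ht); auto.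
    - intros [-> | ->]; auto. }
  split.
  - destruct (classic (Ikappa J (-1))) as [Hi|Hi].
    + right. apply Hboth; auto.
    + left. intro t. split.
      * intro Ht. destruct (Req_dec t 1); auto. exfalso.
        destruct (key J t Hq H1 Ht) as [-> _]; auto.
      * intros ->; auto.
  - split.
    + intro H. apply Hm. apply H. auto.
    + intro H. apply Hboth. apply Hm. exact H.
Qed.
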